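(* Let $(r_n)_{n\ge1}$ be the unique sequence of positive reals satisfying $r_n=2n-1+\dfrac{n^2}{r_{n+1}}$ for all $n\ge1$ (equivalently $r_1=4/\pi$ and $r_{n+1}=n^2/(r_n-(2n-1))$). Then for all $n\ge1$, $$\Big\lfloor r_n+\tfrac12\Big\rfloor=\Big\lfloor (1+\sqrt2)\,n-\tfrac12\sqrt2\Big\rfloor.$$ *)

(* Defs.v *)
From Stdlib Require Export Reals ZArith.
Open Scope R_scope.

(* floor of a real number, as an integer: Int_part x = up x - 1, i.e. the
   greatest integer <= x. *)
Definition floorR (x : R) : Z := Int_part x.

(* Main.v *)
Require Import Defs.
From Stdlib Require Import Reals ZArith Lra Lia Psatz.
Open Scope R_scope.

Lemma step_lem (x R h s : R) : 1 <= x -> s*s = 2*s+1 -> 12/5 <= s -> 2*x+1 <= R -> 0 <= h ->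
  Rabs (R - s*(x+/2)) <= 3/20/(x+1) + (x+1)*h ->
  Rabs (2*x-1 + x^2/R - (s*x - s/2)) <= 3/20/x + x*(h/2).
Proof.
  intros hx hs hs2 hR hh hb.
  set (Q := s*(x+/2)) in *.
  assert (hQ : 2*x+1 <= Q) by (unfold Q; nra).
  assert (E: (s*x - s/2) = 2*x-1 + (x^2 - /4)/Q).
  { assert (E1 : (s*x - s/2 - 2*x + 1)*Q = x^2 - /4).
    { unfold Q. transitivity ((s*s-2*s-1)*(x^2-/4) + x^2 - /4); [field|]. rewrite hs; field. }
    rewrite <- E1. field. lra. }
  rewrite E.
  assert (E2 : 2 * x - 1 + x ^ 2 / R - (2 * x - 1 + (x ^ 2 - / 4) / Q)
     = - (x^2/(R*Q)) * (R - Q) + /(4*Q)) by (field; lra).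
  rewrite E2.
  assert (hl : 0 <= x^2/(R*Q) <= /4).
  { split. unfold Rdiv; apply Rmult_le_pos; [nra| apply Rlt_le, Rinv_0_lt_compat; nra]. apply Rmult_le_reg_r with (R*Q). nra.
    unfold Rdiv. rewrite Rmult_assoc, Rinv_l by nra. nra. }
  eapply Rle_trans. apply Rabs_triang.
  rewrite Rabs_mult, Rabs_Ropp, (Rabs_pos_eq (x^2/(R*Q))) by lra.
  rewrite (Rabs_pos_eq (/(4*Q))) by (apply Rlt_le, Rinv_0_lt_compat; lra).
  assert (h1 : x ^ 2 / (R * Q) * Rabs (R - Q) <= /4 * (3/20/(x+1) + (x+1)*h)).
  { apply Rmult_le_compat; try lra. apply Rabs_pos. }
  assert (h2 : /(4*Q) <= /(4*s*x)).
  { apply Rinv_le_contravar. nra. unfold Q. nra. }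
  assert (h3 : /4 * (3/20/(x+1)) <= 3/80/x).
  { replace (/4 * (3/20/(x+1))) with (3/80 * /(x+1)) by (field; lra).
    unfold Rdiv. apply Rmult_le_compat_l. lra.
    apply Rinv_le_contravar; lra. }
  assert (h4 : /(4*s*x) <= 5/48/x).
  { replace (/(4*s*x)) with (/(4*s) * /x) by (field; lra).
    unfold Rdiv. apply Rmult_le_compat_r. apply Rlt_le, Rinv_0_lt_compat; lra.
    replace (5*/48) with (/(48/5)) by field. apply Rinv_le_contravar; lra. }
  assert (h5 : 3/80/x + 5/48/x <= 3/20/x).
  { unfold Rdiv. assert (0 < /x) by (apply Rinv_0_lt_compat; lra). nra. }
  nra.
Qed.

Lemma sqrt2_facts : sqrt 2 * sqrt 2 = 2 /\ 7/5 < sqrt 2 < 3/2.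
Proof.
  assert (h : sqrt 2 * sqrt 2 = 2) by (apply sqrt_sqrt; lra).
  assert (h0 : 0 <= sqrt 2) by apply sqrt_pos.
  split; [exact h| split; nra].
Qed.

Lemma Int_part_unique (z : R) (k : Z) : IZR k <= z < IZR k + 1 -> Int_part z = k.
Proof.
  intros [h1 h2]. destruct (base_Int_part z) as [b1 b2].
  assert (IZR (Int_part z) < IZR k + 1) by lra.
  assert (IZR k < IZR (Int_part z) + 1) by lra.
  rewrite <- plus_IZR in *. apply lt_IZR in H. apply lt_IZR in H0. lia.
Qed.

Lemma parity (N j : Z) : (2*(2*N-1)*(2*N-1) - 4*j*j >= 2 \/ 2*(2*N-1)*(2*N-1) - 4*j*j <= -2)%Z.
Proof.
  replace (2*(2*N-1)*(2*N-1) - 4*j*j)%Z with (4*(2*N*N-2*N-j*j)+2)%Z by ring. lia.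
Qed.

Lemma parityR (N j : Z) : let m := 2*IZR N - 1 in
  2*m*m - 4*IZR j*IZR j >= 2 \/ 2*m*m - 4*IZR j*IZR j <= -2.
Proof.
  intro m. unfold m.
  assert (E : IZR (2*(2*N-1)*(2*N-1) - 4*j*j) = 2*(2*IZR N-1)*(2*IZR N-1) - 4*IZR j*IZR j).
  { rewrite minus_IZR, !mult_IZR, minus_IZR, mult_IZR. reflexivity. }
  rewrite <- E. destruct (parity N j) as [h|h]; [left|right].
  apply Rle_ge. apply IZR_le. lia. apply IZR_le in h. exact h. 
Qed.

Lemma floor_stable (n : nat) (eps : R) : (1 <= n)%nat -> Rabs eps <= 3/20/INR n ->
  Int_part ((1 + sqrt 2) * INR n - / 2 * sqrt 2 + eps) = Int_part ((1 + sqrt 2) * INR n - / 2 * sqrt 2).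
Proof.
  intros hn he.
  destruct sqrt2_facts as [hs [hs1 hs2]].
  set (X := (1 + sqrt 2) * INR n - / 2 * sqrt 2).
  set (K := Int_part X).
  destruct (base_Int_part X) as [b1 b2]. fold K in b1, b2.
  assert (hx : 1 <= INR n) by (apply (le_INR 1); exact hn).
  set (x := INR n) in *.
  set (m := 2*x-1).
  assert (hex : Rabs eps * x <= 3/20).
  { apply Rmult_le_reg_r with (/x). apply Rinv_0_lt_compat; lra.
    rewrite Rmult_assoc, Rinv_r by lra. lra. }
  assert (hea : 0 <= Rabs eps) by apply Rabs_pos.
  assert (heps : - Rabs eps <= eps <= Rabs eps) by (split; [apply Ropp_le_cancel; rewrite Ropp_involutive; rewrite <- Rabs_Ropp; apply RRle_abs|apply RRle_abs]).
  assert (hxN : x = IZR (Z.of_nat n)) by apply INR_IZR_INZ.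
  apply Int_part_unique. split.
  -
    set (j := (K - Z.of_nat n)%Z).
    assert (hj : IZR K = x + IZR j) by (unfold j; rewrite minus_IZR; lra).
    set (y := sqrt 2 * m - 2 * IZR j).
    assert (hy : X - IZR K = y / 2) by (unfold y, m, X; rewrite hj; fold x; lra).
    assert (hid : y * (2 * sqrt 2 * m - y) = 2*m*m - 4*IZR j*IZR j).
    { unfold y. transitivity ((sqrt 2 * sqrt 2) * m * m - 4*IZR j*IZR j); [ring|]. rewrite hs. ring. }
    pose proof (parityR (Z.of_nat n) j) as hp; cbv zeta in hp; rewrite <- hxN in hp; fold m in hp;
    destruct (Rle_or_lt (Rabs eps * 2) y) as [hle|hlt]; [lra|].
    assert (Rabs eps <= 3/20) by nra.
    destruct hp as [hp|hp];
      rewrite <- hid in hp.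
    +
      exfalso.
      assert (0 <= y) by lra.
      assert (y * (2 * sqrt 2 * m - y) <= y * (2*sqrt 2 * m)) by nra.
      assert (y * (2*sqrt 2 * m) <= Rabs eps * 2 * (2 * sqrt 2 * (2*x))) by (apply Rmult_le_compat; try lra; unfold m; nra).
      nra.
    + exfalso. assert (0 <= y) by lra.
      assert (0 <= 2*sqrt 2*m) by (unfold m; nra). nra.
  -
    set (j := (K + 1 - Z.of_nat n)%Z).
    assert (hj : IZR K + 1 = x + IZR j) by (unfold j; rewrite minus_IZR, plus_IZR; lra).
    set (y := 2 * IZR j - sqrt 2 * m).
    assert (hy : IZR K + 1 - X = y / 2) by (unfold y, m, X; rewrite hj; fold x; lra).
    assert (hid : y * (y + 2 * sqrt 2 * m) = - (2*m*m - 4*IZR j*IZR j)).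
    { unfold y. transitivity (- ((sqrt 2 * sqrt 2) * m * m - 4*IZR j*IZR j)); [ring|]. rewrite hs. ring. }
    assert (hypos : 0 < y) by lra.
    assert (hm : 0 < 2 * sqrt 2 * m) by (unfold m; nra).
    pose proof (parityR (Z.of_nat n) j) as hp; cbv zeta in hp; rewrite <- hxN in hp; fold m in hp;
    destruct hp as [hp|hp].
    + exfalso. nra.
    + destruct (Rle_or_lt y (Rabs eps * 2)) as [hle|hlt]; [|lra].
      exfalso.
      assert (y * (y + 2*sqrt 2*m) <= Rabs eps * 2 * (Rabs eps * 2 + 2 * sqrt 2 * m)).
      { apply Rmult_le_compat; lra. }
      assert (Rabs eps <= 3/20) by nra.
      assert (Rabs eps * 2 * (2 * sqrt 2 * m) <= Rabs eps * x * (8 * sqrt 2)) by (unfold m; nra).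
      nra.
Qed.

Theorem mainTheorem8 (r : nat -> R)
  (hpos : forall n : nat, (1 <= n)%nat -> 0 < r n)
  (hrec : forall n : nat, (1 <= n)%nat ->
     r n = 2 * INR n - 1 + (INR n) ^ 2 / r (S n)) :
  forall n : nat, (1 <= n)%nat ->
    floorR (r n + / 2) = floorR ((1 + sqrt 2) * INR n - / 2 * sqrt 2).
Proof.
  destruct sqrt2_facts as [hs2 [hsa hsb]].
  set (s := 1 + sqrt 2).
  assert (hs : s * s = 2*s+1) by (unfold s; nra).
  assert (hsl : 12/5 <= s) by (unfold s; lra).
  assert (hsu : s <= 3) by (unfold s; lra).
  set (d := fun n => r n - (s * INR n - s/2)).
  assert (hlow : forall n, (1 <= n)%nat -> 2 * INR n - 1 <= r n).
  { intros n hn. rewrite (hrec n hn).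
    assert (0 < r (S n)) by (apply hpos; lia).
    assert (0 <= INR n ^ 2 / r (S n)).
    { unfold Rdiv. apply Rmult_le_pos. apply pow2_ge_0. apply Rlt_le, Rinv_0_lt_compat; lra. }
    lra. }
  assert (hINR : forall n, (1 <= n)%nat -> 1 <= INR n) by (intros n hn; apply (le_INR 1); exact hn).
  assert (crude : forall n, (1 <= n)%nat -> Rabs (d n) <= INR n).
  { intros n hn. unfold d. pose proof (hINR n hn) as hx.
    pose proof (hlow (S n) ltac:(lia)) as hl. rewrite S_INR in hl.
    assert (hq : INR n ^ 2 / r (S n) <= INR n / 2).
    { apply Rmult_le_reg_r with (r (S n)). lra. unfold Rdiv.
      rewrite Rmult_assoc, Rinv_l by lra. nra. }
    pose proof (hrec n hn). pose proof (hlow n hn).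
    apply Rabs_le. split; nra. }
  assert (claim : forall k n, (1 <= n)%nat -> Rabs (d n) <= 3/20/INR n + INR n * (/2)^k).
  { induction k as [|k IH]; intros n hn.
    - pose proof (crude n hn). pose proof (hINR n hn).
      assert (0 <= 3/20/INR n) by (unfold Rdiv; apply Rmult_le_pos; [lra|apply Rlt_le, Rinv_0_lt_compat; lra]).
      simpl. lra.
    - pose proof (IH (S n) ltac:(lia)) as h. rewrite S_INR in h.
      pose proof (hlow (S n) ltac:(lia)) as hl. rewrite S_INR in hl.
      unfold d in h |- *. rewrite S_INR in h. rewrite (hrec n hn).
      replace (INR n * (/2)^(S k)) with (INR n * ((/2)^k/2)) by (simpl; field).
      apply step_lem; auto.
      + lra.
      + apply pow_le; lra.
      + replace (r (S n) - s * (INR n + / 2)) with (r (S n) - (s * (INR n + 1) - s / 2)) by field.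
        exact h. }
  intros n hn. unfold floorR.
  pose proof (hINR n hn) as hx.
  assert (hd : Rabs (d n) <= 3/20/INR n).
  { destruct (Rle_or_lt (Rabs (d n)) (3/20/INR n)) as [h|h]; [exact h|exfalso].
    assert (hy : 0 < (Rabs (d n) - 3/20/INR n) / INR n).
    { unfold Rdiv. apply Rmult_lt_0_compat; [lra|apply Rinv_0_lt_compat; lra]. }
    destruct (pow_lt_1_zero (/2) ltac:(rewrite Rabs_pos_eq; lra) _ hy) as [N HN].
    specialize (HN N (Nat.le_refl N)). rewrite Rabs_pos_eq in HN by (apply pow_le; lra).
    pose proof (claim N n hn) as hc.
    assert (INR n * (/2)^N < Rabs (d n) - 3/20/INR n).
    { apply Rmult_lt_reg_r with (/INR n). apply Rinv_0_lt_compat; lra.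
      replace (INR n * (/2)^N * / INR n) with ((/2)^N) by (field; lra). exact HN. }
    lra. }
  pose proof (floor_stable n (d n) hn hd) as HF. fold s in HF. rewrite <- HF. f_equal. unfold d, s. field.
Qed.
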